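(* Let $r>0$ and let $B_r=\{F\in CBV(I):\|F\|_{BV}\leq r\}$. Then there exist a subinterval $J\subseteq\mathbb{R}$ and an uncountable family $\{F_h\in CBV(I):h\in J\}$ such that: $F_h\in B_r$ for each $h\in J$; $F_h(0)=F_h(1)=0$ for each $h\in J$; and $\|F_{h_1}-F_{h_2}\|_{BV}=2r$ for any distinct $h_1,h_2\in J$.
   Context: $I=[0,1]$. $CBV(I)$ is the space of continuous real functions $F$ on $I$ of bounded variation, i.e. with $V(F)=\sup\sum_{i=1}^m|F(x_i)-F(x_{i-1})|<\infty$, the supremum over partitions $0=x_0<\dots<x_m=1$; it is normed by $\|F\|_{BV}=|F(0)|+V(F)$. *)

(* Defs.v *)
From mathcomp Require Import all_boot all_order all_algebra.
From mathcomp Require Import all_classical all_reals all_analysis.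
Set Implicit Arguments. Unset Strict Implicit. Unset Printing Implicit Defensive.
Import Order.TTheory GRing.Theory Num.Theory numFieldNormedType.Exports.
Local Open Scope classical_set_scope.
Local Open Scope ring_scope.

Definition CBV {R : realType} (F : R -> R) : Prop :=
  {within `[0, 1], continuous F} /\ bounded_variation 0 1 F.

(* V(F) = sup of variation sums (total_variation, an extended real, finite
   for F of bounded variation); ||F||_BV = |F(0)| + V(F). *)
Definition BVnorm {R : realType} (F : R -> R) : R :=
  `|F 0| + fine (total_variation 0 1 F).

(* Main.v *)
Require Import Defs.
From mathcomp Require Import all_boot all_order all_algebra.
From mathcomp Require Import all_classical all_reals all_analysis.
From mathcomp Require Import ring lra zify.
Import Order.TTheory GRing.Theory Num.Theory numFieldNormedType.Exports.
Local Open Scope classical_set_scope.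
Local Open Scope ring_scope.
Definition val {R : realType} (A : nat -> nat) : R :=
  fine (\sum_(k <oo) (((A k)%:R / 6 ^+ k.+1 : R)%:E))%E.

Lemma geo_partial {R : realType} n :
  \sum_(0 <= k < n) (4 / 6 ^+ k.+1 : R) = 4/5 - 4 / (5 * 6 ^+ n).
Proof.
elim: n => [|n IH]; first by rewrite big_geq// expr0 mulr1 subrr.
rewrite big_nat_recr//= IH exprS.
have h : (6:R) ^+ n != 0 by rewrite expf_neq0.
by field; rewrite h.
Qed.

Lemma val_series_bnd {R : realType} (A : nat -> nat) :
  (forall k, (A k <= 4)%N) ->
  (0 <= \sum_(k <oo) (((A k)%:R / 6 ^+ k.+1 : R)%:E) <= (4/5 : R)%:E)%E.
Proof.
move=> A4; apply/andP; split.
  by apply: nneseries_ge0 => k _; rewrite lee_fin divr_ge0.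
apply: (@le_trans _ _ (\sum_(k <oo) ((4 / 6 ^+ k.+1 : R)%:E))%E).
  apply: lee_nneseries => [k _ _|k _]; first by rewrite lee_fin divr_ge0.
  by rewrite lee_fin ler_pM2r ?invr_gt0 ?exprn_gt0// ler_nat.
apply: lime_le; first by apply: is_cvg_nneseries => k _ _; rewrite lee_fin divr_ge0.
apply: nearW => n /=; rewrite sumEFin geo_partial lee_fin.
by rewrite lerBlDr lerDl divr_ge0// ?mulr_ge0// exprn_ge0.
Qed.

Lemma val_ge0 {R : realType} (A : nat -> nat) :
  (forall k, (A k <= 4)%N) -> 0 <= (val A : R).
Proof.
move=> A4; have /andP[h1 h2] := @val_series_bnd R _ A4.
by rewrite /val fine_ge0.
Qed.

Lemma val_le {R : realType} (A : nat -> nat) :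
  (forall k, (A k <= 4)%N) -> (val A : R) <= 4/5.
Proof.
move=> A4; have /andP[h1 h2] := @val_series_bnd R _ A4.
rewrite /val -lee_fin fineK//; rewrite fin_numE.
apply/andP; split; apply/eqP => e; move: h1 h2; rewrite e //.
Qed.

Lemma val_rec {R : realType} (A : nat -> nat) :
  (forall k, (A k <= 4)%N) ->
  (val A : R) = ((A 0%N)%:R + val (fun k => A k.+1)) / 6.
Proof.
move=> A4.
have A4' : forall k, ((fun k => A k.+1) k <= 4)%N by move=> k; exact: A4.
have /andP[h1 h2] := @val_series_bnd R _ A4'.
have fin : (\sum_(k <oo) ((((fun k => A k.+1) k)%:R / 6 ^+ k.+1 : R)%:E))%E \is a fin_num.
  rewrite fin_numE; apply/andP; split; apply/eqP => e; move: h1 h2; rewrite e //.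
rewrite /val (@nneseries_recl R xpredT) //.
have -> : (\sum_(1 <= k <oo | xpredT k) (((A k)%:R / 6 ^+ k.+1 : R)%:E) =
    \sum_(i <oo) (((A (i + 1)%N)%:R / 6 ^+ (i + 1)%N.+1 : R)%:E))%E.
  by rewrite (@nneseries_addn R (fun k => ((A k)%:R / 6 ^+ k.+1 : R)%:E) 1)// => k; rewrite lee_fin divr_ge0.
rewrite (eq_eseriesr (g := fun k => ((6^-1 : R)%:E * (((A k.+1)%:R / 6 ^+ k.+1 : R)%:E))%E)); last first.
  by move=> i _; rewrite addn1 -EFinM exprS; congr (_%:E); rewrite invfM; field.
rewrite nneseriesZl; last by move=> k _; rewrite lee_fin divr_ge0.
rewrite -(fineK fin) -EFinM -EFinD /= expr1.
by rewrite mulrDl [6^-1 * _]mulrC.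
Qed.

Fixpoint cN (A : nat -> nat) (N : nat) : nat :=
  if N is N'.+1 then (6 * cN A N' + A N')%N else 0%N.

Lemma val_split {R : realType} (A : nat -> nat) N :
  (forall k, (A k <= 4)%N) ->
  (6 ^+ N * val A : R) = (cN A N)%:R + val (fun k => A (k + N)%N).
Proof.
move=> A4; elim: N => [|N IH].
  by rewrite expr0 mul1r add0r; congr val; apply/funext => k; rewrite addn0.
rewrite exprS -mulrA IH (@val_rec R (fun k => A (k + N)%N)) //.
rewrite /= natrD natrM.
have -> : (fun k => A (k.+1 + N)%N) = (fun k => A (k + N.+1)%N).
  by apply/funext => k; rewrite addSnnS.
by rewrite add0n; field.
Qed.

Lemma val_gt0 {R : realType} (A : nat -> nat) :
  (forall k, (1 <= A k <= 4)%N) -> 0 < (val A : R).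
Proof.
move=> A14.
have A4 : forall k, (A k <= 4)%N by move=> k; case/andP: (A14 k).
rewrite val_rec//.
have h0 : 0 <= (val (fun k => A k.+1) : R) by apply: val_ge0 => k; exact: A4.
have h1 : 1 <= ((A 0%N)%:R : R) by rewrite ler1n; case/andP: (A14 0%N).
apply: divr_gt0 => //; lra.
Qed.

Lemma cell {R : realType} (A : nat -> nat) N :
  (forall k, (1 <= A k <= 4)%N) ->
  ((cN A N)%:R < 6 ^+ N * (val A : R)) /\ (6 ^+ N * (val A : R) <= (cN A N)%:R + 1).
Proof.
move=> A14.
have A4 : forall k, (A k <= 4)%N by move=> k; case/andP: (A14 k).
rewrite val_split//.
have h1 : 0 < (val (fun k => A (k + N)%N) : R) by apply: val_gt0 => k; exact: A14.
have h2 : (val (fun k => A (k + N)%N) : R) <= 4/5 by apply: val_le => k; exact: A4.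
split; lra.
Qed.

Lemma cN_inj (A B : nat -> nat) N :
  (forall k, (A k < 6)%N) -> (forall k, (B k < 6)%N) ->
  cN A N = cN B N -> forall k, (k < N)%N -> A k = B k.
Proof.
move=> A6 B6; elim: N => [//|N IH] /= e k kN.
have HA := A6 N; have HB := B6 N.
have eN : A N = B N by lia.
have eC : cN A N = cN B N by lia.
move: kN; rewrite ltnS leq_eqVlt => /orP[/eqP -> //|kN].
exact: IH.
Qed.

Lemma cN_eq (A B : nat -> nat) (n : nat) :
  (forall k, (k < n)%N -> A k = B k) -> cN A n = cN B n.
Proof.
elim: n => [//|n IH] e /=.
by rewrite IH ?e// => k kn; apply: e; exact: ltnW.
Qed.

Lemma cN_lt (A B : nat -> nat) n :
  (forall k, (k < n)%N -> A k = B k) -> (A n < B n)%N ->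
  (cN A n.+1 < cN B n.+1)%N.
Proof. by move=> e lt /=; rewrite (cN_eq _ _ _ e); lia. Qed.

Definition Mt {R : realType} (y : R) (k : nat) : nat := Num.truncn (y * 2 ^+ k).
Definition dg {R : realType} (y : R) (k : nat) : bool := odd (Mt y k.+1).

Lemma Mt_step {R : realType} (y : R) k : 0 <= y ->
  Mt y k.+1 = (Mt y k).*2 \/ Mt y k.+1 = (Mt y k).*2.+1.
Proof.
move=> y0; rewrite /Mt.
have yk0 : 0 <= y * 2 ^+ k by rewrite mulr_ge0// exprn_ge0.
have /andP[h1 h2] := truncn_itv yk0.
set m := Num.truncn (y * 2 ^+ k) in h1 h2 *.
have y1 : 0 <= y * 2 ^+ k.+1 by rewrite mulr_ge0// exprn_ge0.
have a1 : ((m.*2)%N <= Num.truncn (y * 2 ^+ k.+1))%N.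
  rewrite truncn_ge_nat// -muln2 natrM exprSr mulrA ler_pM2r//.
have a2 : (Num.truncn (y * 2 ^+ k.+1) < (m.*2).+2)%N.
  rewrite truncn_lt_nat// exprSr mulrA.
  have -> : ((m.*2).+2)%:R = (m.+1)%:R * (2:R) by rewrite -natrM muln2 doubleS.
  by rewrite ltr_pM2r.
lia.
Qed.

Lemma Mt0 {R : realType} (y : R) : 0 <= y < 1 -> Mt y 0 = 0%N.
Proof.
case/andP => y0 y1; rewrite /Mt expr0 mulr1.
by apply: truncn_def; rewrite y0 /= y1.
Qed.

Lemma Mt_le {R : realType} (y y' : R) k : y <= y' -> (Mt y k <= Mt y' k)%N.
Proof.
move=> yy; apply: le_truncn; rewrite ler_pM2r// exprn_gt0//.
Qed.

Lemma digit_sep {R : realType} (y y' : R) : 0 <= y -> y < y' -> y' < 1 ->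
  exists n, (forall k, (k < n)%N -> dg y k = dg y' k) /\ dg y n = false /\ dg y' n = true.
Proof.
move=> y0 yy y'1.
have ex : exists n, (Mt y n < Mt y' n)%N.
  set d := y' - y.
  have d0 : 0 < d by rewrite subr_gt0.
  exists (Num.truncn d^-1).+1.
  set n := (Num.truncn d^-1).+1.
  have h1 : d^-1 < n%:R by rewrite truncnS_gt.
  have h2 : (n%:R : R) <= 2 ^+ n.
    by rewrite -natrX ler_nat ltnW// ltn_expl.
  have h3 : 1 < d * 2 ^+ n.
    have : d^-1 < 2 ^+ n := lt_le_trans h1 h2.
    by rewrite -(ltr_pdivrMl _ _ d0) mulr1.
  rewrite /Mt.
  have yk0 : 0 <= y * 2 ^+ n by rewrite mulr_ge0// exprn_ge0.
  have /andP[g1 g2] := truncn_itv yk0.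
  rewrite truncn_gt_nat.
  move: h3; rewrite /d mulrBl; lra.
case: (ex_minnP ex) => n Pn nmin.
have Mtm : forall k, (k <= n.-1)%N -> Mt y k = Mt y' k.
  move=> k kn.
  have k1 : (k < n)%N.
    case: n Pn nmin kn => [|n] Pn nmin kn //=.
    by move: Pn; rewrite !Mt0 ?y0 ?(ltW (le_lt_trans y0 yy)) ?(lt_trans yy)//.
  have := @Mt_le R y y' k (ltW yy).
  move=> le; case: (ltnP (Mt y k) (Mt y' k)) => h; last by lia.
  by have := nmin _ h; lia.
case: n Pn nmin Mtm => [|m] Pn nmin Mtm.
  by move: Pn; rewrite !Mt0 ?y0 ?(ltW (le_lt_trans y0 yy)) ?(lt_trans yy)//.
exists m; split.
  by move=> k km; rewrite /dg Mtm.
have e := Mtm m (leqnn _).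
have y'0 : 0 <= y' by rewrite (le_trans y0)// ltW.
rewrite /dg.
case: (@Mt_step R y m y0) => ha; case: (@Mt_step R y' m y'0) => hb;
  rewrite ha hb ?e /= ?odd_double //; move: Pn; rewrite ha hb e; lia.
Qed.

Definition tseq {R : realType} (s : bool) (h : R) : nat -> bool :=
  fun k => if k is k'.+1 then dg h k' else s.
Definition Adig {R : realType} (t : nat -> bool) (y : R) (k : nat) : nat :=
  (1 + 2 * t k + dg y k)%N.
Definition psi {R : realType} (t : nat -> bool) (y : R) : R := val (Adig t y).

Lemma Adig_bnd {R : realType} t (y : R) k : (1 <= Adig t y k <= 4)%N.
Proof. by rewrite /Adig; case: (t k); case: (dg y k). Qed.

Lemma Adig_le4 {R : realType} t (y : R) k : (Adig t y k <= 4)%N.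
Proof. by case/andP: (Adig_bnd t y k). Qed.

Lemma psi_gt0 {R : realType} t (y : R) : 0 < psi t y.
Proof. by apply: val_gt0 => k; exact: Adig_bnd. Qed.

Lemma psi_le {R : realType} t (y : R) : psi t y <= 4/5.
Proof. by apply: val_le => k; exact: Adig_le4. Qed.

Lemma psi_cell {R : realType} t (y : R) N :
  ((cN (Adig t y) N)%:R < 6 ^+ N * psi t y) /\
  (6 ^+ N * psi t y <= (cN (Adig t y) N)%:R + 1).
Proof. by apply: cell => k; exact: Adig_bnd. Qed.

Lemma psi_lt {R : realType} t (y y' : R) : 0 <= y -> y < y' -> y' < 1 ->
  psi t y < psi t y'.
Proof.
move=> y0 yy y'1.
have [n [e [d1 d2]]] := @digit_sep R y y' y0 yy y'1.
have lt : (cN (Adig t y) n.+1 < cN (Adig t y') n.+1)%N.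
  apply: cN_lt.
    by move=> k kn; rewrite /Adig e.
  by rewrite /Adig d1 d2 addn0; lia.
have [_ h1] := psi_cell t y n.+1.
have [h2 _] := psi_cell t y' n.+1.
have : ((cN (Adig t y) n.+1)%:R + 1 <= (cN (Adig t y') n.+1)%:R :> R).
  by rewrite natr1 ler_nat.
move=> h3.
have : 6 ^+ n.+1 * psi t y < 6 ^+ n.+1 * psi t y' by lra.
by rewrite ltr_pM2l// exprn_gt0.
Qed.

Lemma psi_lew {R : realType} t (y y' : R) : 0 <= y -> y <= y' -> y' < 1 ->
  psi t y <= psi t y'.
Proof.
move=> y0; rewrite le_eqVlt => /orP[/eqP -> //|yy] y'1.
exact/ltW/psi_lt.
Qed.

Lemma cell_index {R : realType} t (y : R) N (j : nat) :
  (j%:R < 6 ^+ N * psi t y) -> (6 ^+ N * psi t y <= j%:R + 1) ->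
  j = cN (Adig t y) N.
Proof.
move=> h1 h2; have [h3 h4] := psi_cell t y N.
set c := cN (Adig t y) N in h3 h4 *.
have a : (j%:R < c%:R + 1 :> R) by lra.
have b : (c%:R < j%:R + 1 :> R) by lra.
move: a b; rewrite !natr1 !ltr_nat; lia.
Qed.

Lemma Adig_inj {R : realType} t t' (y y' : R) k :
  Adig t y k = Adig t' y' k -> t k = t' k.
Proof.
by rewrite /Adig; case: (t k); case: (t' k); case: (dg y k); case: (dg y' k).
Qed.

Lemma cell_sep {R : realType} t t' (y y' : R) N (j : nat) k :
  (k < N)%N -> t k != t' k ->
  (j%:R < 6 ^+ N * psi t y) -> (6 ^+ N * psi t y <= j%:R + 1) ->
  (j%:R < 6 ^+ N * psi t' y') -> (6 ^+ N * psi t' y' <= j%:R + 1) -> False.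
Proof.
move=> kN tt a1 a2 b1 b2.
have e1 := @cell_index R t y N j a1 a2.
have e2 := @cell_index R t' y' N j b1 b2.
have lt6 : forall t0 (y0 : R) k0, (Adig t0 y0 k0 < 6)%N.
  by move=> t0 y0 k0; have := Adig_le4 t0 y0 k0; lia.
have := @cN_inj (Adig t y) (Adig t' y') N (lt6 t y) (lt6 t' y').
rewrite -e1 -e2 => /(_ erefl k kN) /Adig_inj.
by move/eqP; rewrite (negbTE tt).
Qed.

Definition Sset {R : realType} (t : nat -> bool) (x : R) : set R :=
  [set z | z = 0 \/ (0 <= z < 1 /\ psi t z <= x)].
Definition Phi {R : realType} (t : nat -> bool) (x : R) : R := sup (Sset t x).

Lemma Sset0 {R : realType} t (x : R) : Sset t x 0.
Proof. by left. Qed.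

Lemma Sset_ub {R : realType} t (x : R) : ubound (Sset t x) 1.
Proof. by move=> z [->|[/andP[_ /ltW]]]. Qed.

Lemma Sset_hub {R : realType} t (x : R) : has_ubound (Sset t x).
Proof. by exists 1; exact: Sset_ub. Qed.

Lemma Sset_ge0 {R : realType} t (x z : R) : Sset t x z -> 0 <= z.
Proof. by move=> [->|[/andP[]]]. Qed.

Lemma Phi_ge0 {R : realType} t (x : R) : 0 <= Phi t x.
Proof. exact: (ub_le_sup (Sset_hub t x) (Sset0 t x)). Qed.

Lemma Phi_le1 {R : realType} t (x : R) : Phi t x <= 1.
Proof. by apply: ge_sup; [exists 0; exact: Sset0|exact: Sset_ub]. Qed.

Lemma Phi_in {R : realType} t (x z : R) : Sset t x z -> z <= Phi t x.
Proof. exact: (ub_le_sup (Sset_hub t x)). Qed.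

Lemma Phi_mono {R : realType} t (x x' : R) : x <= x' -> Phi t x <= Phi t x'.
Proof.
move=> xx; apply: ge_sup; first by exists 0; exact: Sset0.
move=> z [->|[z01 pz]]; first exact: Phi_ge0.
by apply: Phi_in; right; split => //; exact: le_trans xx.
Qed.

Lemma Phi_flat {R : realType} t (a b : R) : a <= b ->
  (forall y, 0 <= y < 1 -> ~ (a < psi t y /\ psi t y <= b)) -> Phi t a = Phi t b.
Proof.
move=> ab H; rewrite /Phi; congr sup; apply/seteqP; split.
  move=> z [->|[z01 pz]]; first by left.
  by right; split => //; exact: le_trans ab.
move=> z [->|[z01 pz]]; first by left.
right; split => //; rewrite leNgt; apply/negP => az; exact: (H z z01).
Qed.

Lemma Phi0 {R : realType} t : Phi t (0 : R) = 0.
Proof.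
apply/eqP; rewrite eq_le Phi_ge0 andbT; apply: ge_sup; first by exists 0; left.
move=> z [->//|[_ pz]].
by have := psi_gt0 t z; rewrite ltNge pz.
Qed.

Lemma Phi1 {R : realType} t : Phi t (1 : R) = 1.
Proof.
apply/eqP; rewrite eq_le Phi_le1 /=; rewrite leNgt; apply/negP => lt.
have h0 := Phi_ge0 t (1 : R).
set p := Phi t (1 : R) in lt h0 *.
have : Sset t (1:R) ((p + 1) / 2).
  right; split; first by apply/andP; split; lra.
  by have := psi_le t ((p + 1) / 2); lra.
move/Phi_in; rewrite -/p; lra.
Qed.

Lemma Phi_up {R : realType} t (x e : R) : 0 < e ->
  exists2 d, 0 < d & forall z, z < x + d -> Phi t z <= Phi t x + e.
Proof.
move=> e0; set y1 := Phi t x + e.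
have h0 := Phi_ge0 t x.
have [y11|y11] := leP 1 y1.
  exists 1 => // z _; exact: le_trans (Phi_le1 t z) y11.
have y10 : 0 <= y1 by rewrite /y1; lra.
have px : x < psi t y1.
  rewrite ltNge; apply/negP => h.
  have : Sset t x y1 by right; split => //; apply/andP; split.
  by move/Phi_in; rewrite /y1; lra.
exists (psi t y1 - x); first by rewrite subr_gt0.
move=> z; rewrite addrC subrK => zp.
apply: ge_sup; first by exists 0; left.
move=> w [->|[/andP[w0 w1] pw]]; first by [].
rewrite leNgt; apply/negP => yw.
have := @psi_lew R t y1 w y10 (ltW yw) w1; lra.
Qed.

Lemma Phi_down {R : realType} t (x e : R) : 0 < e ->
  exists2 d, 0 < d & forall z, x - d < z -> Phi t x - e <= Phi t z.
Proof.
move=> e0; have h0 := Phi_ge0 t x.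
have [y0e|y0e] := leP (Phi t x) e.
  by exists 1 => // z _; have := Phi_ge0 t z; lra.
set y3 := Phi t x - e.
have y30 : 0 < y3 by rewrite /y3; lra.
have [w Sw y3w] : exists2 w, Sset t x w & y3 < w.
  by apply: sup_gt; [exists 0; left|rewrite -/(Phi t x) /y3; lra].
case: Sw => [w0|[/andP[w0 w1] pw]]; first by move: y3w; rewrite w0; lra.
have p3 : psi t y3 < psi t w by apply: psi_lt => //; exact: ltW.
exists (x - psi t y3); first by rewrite subr_gt0; lra.
move=> z; rewrite opprB addrC subrK => zp.
apply: Phi_in; right; split; first by apply/andP; split; [exact: ltW|exact: lt_trans w1].
exact: ltW.
Qed.

Lemma Phi_cont {R : realType} t : continuous (@Phi R t).
Proof.
move=> x; apply/cvgrPdist_le => /= e e0.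
have [d1 d10 H1] := @Phi_up R t x e e0.
have [d2 d20 H2] := @Phi_down R t x e e0.
apply/nbhs_ballP; exists (Num.min d1 d2) => /=; first by rewrite lt_min d10 d20.
move=> z; rewrite /ball /= lt_min => /andP[z1 z2].
have a1 : z < x + d1 by move: z1; rewrite ltr_norml; lra.
have a2 : x - d2 < z by move: z2; rewrite ltr_norml; lra.
have := H1 _ a1; have := H2 _ a2.
rewrite ler_norml; lra.
Qed.

Definition Fam {R : realType} (r : R) (h : R) (x : R) : R :=
  r / 2 * Phi (tseq true h) x - r / 2 * Phi (tseq false h) x.

Lemma Fam_cont {R : realType} (r h : R) : continuous (Fam r h).
Proof.
move=> x; apply: cvgB; apply: cvgMr; exact: Phi_cont.
Qed.

Lemma Fam0 {R : realType} (r h : R) : Fam r h 0 = 0.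
Proof. by rewrite /Fam !Phi0 mulr0 subrr. Qed.

Lemma Fam1 {R : realType} (r h : R) : Fam r h 1 = 0.
Proof. by rewrite /Fam !Phi1 subrr. Qed.

Lemma TV_Phi {R : realType} (r : R) t : 0 <= r ->
  total_variation 0 1 (fun x => r / 2 * Phi t x) = (r / 2)%:E.
Proof.
move=> r0; rewrite nondecreasing_total_variation//.
  by rewrite Phi1 Phi0 mulr0 subr0 mulr1.
move=> x y _ _ xy; apply: ler_wpM2l; first by lra.
exact: Phi_mono.
Qed.

Lemma fine_le_of {R : realType} (T : \bar R) (v : R) :
  (0 <= T)%E -> (T <= v%:E)%E -> fine T <= v.
Proof. by case: T => //= x; rewrite !lee_fin. Qed.

Lemma fin_of {R : realType} (T : \bar R) (v : R) :
  (0 <= T)%E -> (T <= v%:E)%E -> T \is a fin_num.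
Proof. by case: T. Qed.

Lemma TV_Fam {R : realType} (r h : R) : 0 <= r ->
  (0 <= total_variation 0 1 (Fam r h) <= r%:E)%E.
Proof.
move=> r0; rewrite total_variation_ge0 ?ler01//=.
have -> : Fam r h = (fun x => r / 2 * Phi (tseq true h) x) \+
                    \- (fun x => r / 2 * Phi (tseq false h) x).
  by apply/funext => x.
apply: le_trans; first exact: total_variation_le.
rewrite total_variationN !TV_Phi// -EFinD lee_fin; lra.
Qed.

Definition gp {R : realType} (N j : nat) : R := j%:R / 6 ^+ N.

Lemma gp_mul {R : realType} N j : 6 ^+ N * (gp N j : R) = j%:R.
Proof.
by rewrite /gp mulrC -mulrA mulVf ?mulr1// expf_neq0.
Qed.

Lemma gp_le {R : realType} N j : (gp N j : R) <= gp N j.+1.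
Proof. by rewrite /gp ler_pM2r ?invr_gt0 ?exprn_gt0// ler_nat. Qed.

Lemma gp_lt {R : realType} N : {homo (@gp R N) : i j / (i < j)%N >-> i < j}.
Proof. by move=> i j ij; rewrite /gp ltr_pM2r ?invr_gt0 ?exprn_gt0// ltr_nat. Qed.

Lemma gp0 {R : realType} N : (gp N 0 : R) = 0.
Proof. by rewrite /gp mul0r. Qed.

Lemma gpK {R : realType} N : (gp N (6 ^ N)%N : R) = 1.
Proof. by rewrite /gp natrX mulfV// expf_neq0. Qed.

Lemma delta_sep {R : realType} t t' k N n :
  (k < N)%N -> t k != t' k ->
  Phi t (gp N n.+1 : R) - Phi t (gp N n) = 0 \/
  Phi t' (gp N n.+1 : R) - Phi t' (gp N n) = 0.
Proof.
move=> kN tt.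
have conv : forall t0 (y : R), gp N n < psi t0 y -> psi t0 y <= gp N n.+1 ->
    (n%:R < 6 ^+ N * psi t0 y) /\ (6 ^+ N * psi t0 y <= n%:R + 1).
  move=> t0 y a b; split.
    by rewrite -(@gp_mul R N n) ltr_pM2l// exprn_gt0.
  by rewrite natr1 -(@gp_mul R N n.+1) ler_pM2l// exprn_gt0.
have flat : forall t0, ~ (exists y : R, 0 <= y < 1 /\ gp N n < psi t0 y /\ psi t0 y <= gp N n.+1) ->
    Phi t0 (gp N n.+1 : R) - Phi t0 (gp N n) = 0.
  move=> t0 nex; rewrite (@Phi_flat R t0 (gp N n) (gp N n.+1)) ?subrr ?gp_le//.
  by move=> y y01 [a b]; apply: nex; exists y.
have [[y [y01 [a1 a2]]]|nex] := pselect (exists y : R, 0 <= y < 1 /\ gp N n < psi t y /\ psi t y <= gp N n.+1); last first.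
  by left; exact: flat.
have [[y' [y'01 [b1 b2]]]|nex'] := pselect (exists y : R, 0 <= y < 1 /\ gp N n < psi t' y /\ psi t' y <= gp N n.+1); last first.
  by right; exact: flat.
have [c1 c2] := conv _ _ a1 a2.
have [d1 d2] := conv _ _ b1 b2.
by have := @cell_sep R t t' y y' N n k kN tt c1 c2 d1 d2.
Qed.

Lemma abs_of {R : realType} (x y : R) : 0 <= y -> (x = y \/ x = - y) -> `|x| = y.
Proof. by move=> y0 [->|->]; rewrite ?normrN ger0_norm. Qed.

Lemma abs4 {R : realType} (a b c d : R) : 0 <= a -> 0 <= b -> 0 <= c -> 0 <= d ->
  (a = 0 \/ b = 0) -> (a = 0 \/ c = 0) -> (a = 0 \/ d = 0) ->
  (b = 0 \/ c = 0) -> (b = 0 \/ d = 0) -> (c = 0 \/ d = 0) ->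
  `|a - b - c + d| = a + b + c + d.
Proof.
move=> a0 b0 c0 d0 ab ac ad bc bd cd.
apply: abs_of; first lra.
have [az|anz] := eqVneq a 0.
  have [bz|bnz] := eqVneq b 0.
    have [cz|cnz] := eqVneq c 0; first by left; lra.
    case: cd => [/eqP|dz]; [by rewrite (negbTE cnz)|right; lra].
  case: bc => [/eqP|cz]; first by rewrite (negbTE bnz).
  case: bd => [/eqP|dz]; first by rewrite (negbTE bnz).
  right; lra.
case: ab => [/eqP|bz]; first by rewrite (negbTE anz).
case: ac => [/eqP|cz]; first by rewrite (negbTE anz).
case: ad => [/eqP|dz]; first by rewrite (negbTE anz).
left; lra.
Qed.

Lemma dg_diff {R : realType} (h1 h2 : R) : 0 <= h1 < 1 -> 0 <= h2 < 1 -> h1 != h2 ->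
  exists k, dg h1 k != dg h2 k.
Proof.
move=> /andP[a1 b1] /andP[a2 b2]; rewrite neq_lt => /orP[lt|lt].
  have [n [_ [d1 d2]]] := @digit_sep R h1 h2 a1 lt b2.
  by exists n; rewrite d1 d2.
have [n [_ [d1 d2]]] := @digit_sep R h2 h1 a2 lt b1.
by exists n; rewrite d1 d2.
Qed.

Lemma lin_id {R : realType} (c a1 b1 a2 b2 a3 b3 a4 b4 : R) :
  (c * a1 - c * a2 - (c * a3 - c * a4)) - (c * b1 - c * b2 - (c * b3 - c * b4)) =
  c * ((a1 - b1) - (a2 - b2) - (a3 - b3) + (a4 - b4)).
Proof. ring. Qed.

Lemma TV_diff {R : realType} (r h1 h2 : R) : 0 < r -> 0 <= h1 < 1 -> 0 <= h2 < 1 ->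
  h1 != h2 -> total_variation 0 1 (Fam r h1 \- Fam r h2) = (2 * r)%:E.
Proof.
move=> r0 h1i h2i hne.
have [k0 hk] := @dg_diff R h1 h2 h1i h2i hne.
set N := k0.+2.
set K := (6 ^ N)%N.
have K0 : (0 < K)%N by rewrite /K expn_gt0.
set s := map (@gp R N) (iota 1 K).
have part : itv_partition 0 1 s.
  split.
    have hs : sorted <%R (map (@gp R N) (iota 0 K.+1)).
      apply: (homo_sorted (e := ltn)); [exact: gp_lt|exact: iota_ltn_sorted].
    by move: hs; rewrite /= gp0.
  rewrite /s -(@gp0 R N) last_map -nth_last size_iota nth_iota; last by rewrite prednK.
  by rewrite add1n prednK// gpK.
have nthE : forall n, (n <= K)%N -> nth 1 (0 :: s) n = gp N n.
  case=> [|m] mK /=; first by rewrite gp0.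
  by rewrite /s (nth_map 0%N) ?size_iota// nth_iota// add1n.
set t1 := tseq true h1; set t2 := tseq false h1.
set t3 := tseq true h2; set t4 := tseq false h2.
have s12 : t1 0%N != t2 0%N by [].
have s14 : t1 0%N != t4 0%N by [].
have s23 : t2 0%N != t3 0%N by [].
have s34 : t3 0%N != t4 0%N by [].
have s13 : t1 k0.+1 != t3 k0.+1 by [].
have s24 : t2 k0.+1 != t4 k0.+1 by [].
have N0 : (0 < N)%N by [].
have Nk : (k0.+1 < N)%N by [].
set D := fun t n => Phi t (gp N n.+1 : R) - Phi t (gp N n).
have D0 : forall t n, 0 <= D t n.
  by move=> t n; rewrite /D subr_ge0; apply: Phi_mono; exact: gp_le.
have tel : forall t, \sum_(0 <= n < K) D t n = 1.
  move=> t; rewrite /D (telescope_sumr (fun n => Phi t (gp N n)))//.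
  by rewrite gpK Phi1 gp0 Phi0 subr0.
have DE : forall t n, D t n = Phi t (gp N n.+1 : R) - Phi t (gp N n) by [].
clearbody D.
have var : variation 0 1 (Fam r h1 \- Fam r h2) s = 2 * r.
  rewrite /variation size_map size_iota.
  rewrite (eq_big_nat _ _ (F2 := fun n => r / 2 * (D t1 n + D t2 n + D t3 n + D t4 n))); last first.
    move=> n /andP[_ nK] /=.
    have e1 : nth 1 s n = gp N n.+1 by exact: (nthE n.+1 nK).
    rewrite e1 nthE ?(ltnW nK)//.
    have -> : Fam r h1 (gp N n.+1) - Fam r h2 (gp N n.+1) -
        (Fam r h1 (gp N n) - Fam r h2 (gp N n)) =
        r / 2 * (D t1 n - D t2 n - D t3 n + D t4 n).
      by rewrite /Fam !DE -/t1 -/t2 -/t3 -/t4; apply: lin_id.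
    rewrite normrM ger0_norm; last by rewrite divr_ge0// ltW.
    congr (_ * _); apply: abs4; try exact: D0.
    - rewrite !DE; exact: (@delta_sep R t1 t2 0 N n N0 s12).
    - rewrite !DE; exact: (@delta_sep R t1 t3 k0.+1 N n Nk s13).
    - rewrite !DE; exact: (@delta_sep R t1 t4 0 N n N0 s14).
    - rewrite !DE; exact: (@delta_sep R t2 t3 0 N n N0 s23).
    - rewrite !DE; exact: (@delta_sep R t2 t4 k0.+1 N n Nk s24).
    - rewrite !DE; exact: (@delta_sep R t3 t4 0 N n N0 s34).
  by rewrite -mulr_sumr !big_split /= !tel; field.
apply/eqP; rewrite eq_le; apply/andP; split.
  apply: le_trans; first exact: total_variation_le.
  rewrite total_variationN.
  have /andP[_ a] := @TV_Fam R r h1 (ltW r0).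
  have /andP[_ b] := @TV_Fam R r h2 (ltW r0).
  by apply: le_trans; first exact: leeD a b; rewrite -EFinD lee_fin; lra.
rewrite -var; apply: ereal_sup_ubound; exists (variation 0 1 (Fam r h1 \- Fam r h2) s) => //.
exact: variations_variation.
Qed.

Theorem mainTheorem6 (R : realType) (r : R) (hr : 0 < r) :
  exists (J : interval R) (F : R -> R -> R),
    ~ countable [set` J] /\
    (forall h, h \in J ->
       [/\ CBV (F h), BVnorm (F h) <= r, F h 0 = 0 & F h 1 = 0]) /\
    (forall h1 h2, h1 \in J -> h2 \in J -> h1 != h2 ->
       BVnorm (F h1 \- F h2) = 2 * r).
Proof.
exists `[0, 1[%R, (Fam r); split; [|split].
- move/countable_lebesgue_measure0; rewrite lebesgue_measure_itv /= lte_fin ltr01.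
  by move/eqP; rewrite sube0 eqe oner_eq0.
- move=> h hJ; have /andP[a b] := @TV_Fam R r h (ltW hr).
  split.
  + split; first by apply: continuous_subspaceT; exact: Fam_cont.
    by apply/bounded_variationP => //; exact: fin_of a b.
  + by rewrite /BVnorm Fam0 normr0 add0r; exact: fine_le_of a b.
  + exact: Fam0.
  + exact: Fam1.
- move=> h1 h2; rewrite !in_itv /= => h1i h2i hne.
  by rewrite /BVnorm TV_diff// /= !Fam0 subrr normr0 add0r.
Qed.
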